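(* Let $F$ be an algebraically closed field, $d\ge 2$ an integer, and $l$ the smallest prime divisor of $d$. Let $D_d$ be the set of decomposable polynomials of degree exactly $d$ in $F[x]$, viewed as a subset of the affine space of polynomials of degree at most $d$ (via their $d+1$ coefficients). Then $D_d=\varnothing$ if $d$ is prime, and otherwise $\dim D_d=l+d/l$.
   Context: For $g,h\in F[x]$, $g\circ h=g(h)$. A polynomial $f$ is decomposable if $f=g\circ h$ with $\deg g\ge2$ and $\deg h\ge 2$. The set $D_d$ is the image of a morphism of varieties (composition), and its dimension is the dimension of its Zariski closure. *)

(* Defs.v *)
From mathcomp Require Import all_boot all_order all_algebra.
From mathcomp Require Import mpoly.
Set Implicit Arguments. Unset Strict Implicit. Unset Printing Implicit Defensive.
Import GRing.Theory.
Local Open Scope ring_scope.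

Definition aset (F : fieldType) (n : nat) := ('I_n -> F) -> Prop.

Definition zclosed (F : fieldType) (n : nat) (Z : aset F n) : Prop :=
  exists P : {mpoly F[n]} -> Prop,
    forall x, Z x <-> (forall p, P p -> p.@[x] = 0).

Definition zclosure (F : fieldType) (n : nat) (S : aset F n) : aset F n :=
  fun x => forall p : {mpoly F[n]}, (forall y, S y -> p.@[y] = 0) -> p.@[x] = 0.

Definition asubset (F : fieldType) (n : nat) (A B : aset F n) : Prop :=
  forall x, A x -> B x.

Definition zirreducible (F : fieldType) (n : nat) (Z : aset F n) : Prop :=
  [/\ exists x, Z x, zclosed Z &
      forall A B : aset F n, zclosed A -> zclosed B ->
        asubset Z (fun x => A x \/ B x) -> asubset Z A \/ asubset Z B].

Definition zchain (F : fieldType) (n : nat) (V : aset F n) (k : nat)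
  (Z : nat -> aset F n) : Prop :=
  (forall i, (i <= k)%N -> zirreducible (Z i) /\ asubset (Z i) V) /\
  (forall i, (i < k)%N -> asubset (Z i) (Z i.+1) /\ ~ asubset (Z i.+1) (Z i)).

Definition zdim_eq (F : fieldType) (n : nat) (V : aset F n) (m : nat) : Prop :=
  (exists Z, zchain V m Z) /\ (forall k Z, zchain V k Z -> (k <= m)%N).

Definition dim_eq (F : fieldType) (n : nat) (S : aset F n) (m : nat) : Prop :=
  zdim_eq (zclosure S) m.

(* f = g o h with deg g >= 2, deg h >= 2 (size = deg + 1). *)
Definition decomposable (F : fieldType) (f : {poly F}) : Prop :=
  exists g h : {poly F}, (2 < size g)%N /\ (2 < size h)%N /\ f = g \Po h.

Definition Dset (F : fieldType) (d : nat) : aset F d.+1 :=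
  fun c => let f := \poly_(i < d.+1) c (inord i) in
           size f = d.+1 /\ decomposable f.

(* Main.v *)
Require Import Defs.
From mathcomp Require Import all_boot all_order all_algebra all_field.
From mathcomp Require Import mpoly.
From Stdlib Require Import Classical.
From mathcomp Require Import zify ring lra.
Set Implicit Arguments. Unset Strict Implicit. Unset Printing Implicit Defensive.
Import GRing.Theory.
Local Open Scope ring_scope.


Local Notation widen := (widen_ord (leqnSn _)).
Section Basic.
Variable F : closedFieldType.

Lemma muni_eval n (p : {mpoly F[n.+1]}) (v : 'I_n.+1 -> F) :
  p.@[v] = (map_poly (meval (fun i => v (widen i))) (muni p)).[v ord_max].
Proof.
rewrite muniE mevalE raddf_sum /= horner_sum; apply: eq_bigr => m _.
rewrite map_polyZ /= map_polyXn hornerZ hornerXn mevalZ mevalX.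
rewrite big_ord_recr /= mulrA; congr (_ * _ * _).
by apply: eq_bigr => i _; rewrite mnmE.
Qed.

Lemma mnm_split n (m1 m2 : 'X_{1..n.+1}) :
  (forall i : 'I_n, m1 (widen i) = m2 (widen i)) -> m1 ord_max = m2 ord_max ->
  m1 = m2.
Proof.
move=> Hw Hm; apply/mnmP => i.
case: (unliftP ord_max i) => [j ->|->] //.
have -> : lift ord_max j = widen j by apply: val_inj => /=; rewrite /bump leqNgt ltn_ord.
exact: Hw.
Qed.

Lemma muni_eq0 n (p : {mpoly F[n.+1]}) : muni p = 0 -> p = 0.
Proof.
move=> H; apply/eqP; apply/negPn/negP => pn0.
have [m0 Hm0] : exists m0, m0 \in msupp p.
  case E: (msupp p) => [|m0 s]; last by exists m0; rewrite inE eqxx.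
  by move/eqP: E; rewrite msupp_eq0 (negbTE pn0).
pose m0' := [multinom m0 (widen i) | i < n].
have := congr1 (fun P : {poly {mpoly F[n]}} => (P`_(m0 ord_max))@_m0') H.
rewrite coef0 mcoeff0 muniE coef_sum raddf_sum /=.
rewrite (bigD1_seq m0) ?msupp_uniq //= big1_seq.
- rewrite coefZ coefXn eqxx mulr1 mcoeffZ mcoeffX eqxx mulr1 addr0.
  by move=> E; move: Hm0; rewrite mcoeff_msupp E eqxx.
- move=> m /andP [mm0 _]; rewrite coefZ coefXn.
  case: eqP => [Emax|_]; last by rewrite mulr0 mcoeff0.
  rewrite mulr1 mcoeffZ mcoeffX; case: eqP => [Ew|]; last by rewrite mulr0.
  exfalso; move/eqP: mm0; apply; apply: mnm_split => // i.
  by have := congr1 (fun m : 'X_{1..n} => m i) Ew; rewrite !mnmE.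
Qed.

Lemma mpoly_nonroot n (p : {mpoly F[n]}) : p != 0 -> exists v, p.@[v] != 0.
Proof.
elim: n p => [|n IH] p pn0.
  exists (fun _ => 0); rewrite {1}(nvar0_mpolyC p) mevalC.
  by apply: contra pn0 => /eqP E; rewrite (nvar0_mpolyC p) E.
have mn0 : muni p != 0 by apply: contra pn0 => /eqP /muni_eq0 ->.
have lc0 : lead_coef (muni p) != 0 by rewrite lead_coef_eq0.
have [u Hu] := IH _ lc0.
pose P := map_poly (meval u) (muni p).
have Pn0 : P != 0.
  apply: contra Hu => /eqP HP.
  by rewrite lead_coefE -coef_map -/P HP coef0.
have [x Hx] : exists x, ~~ root P x by apply/closed_nonrootP.
exists (fun i : 'I_n.+1 => if unlift ord_max i is Some j then u j else x).
rewrite muni_eval unlift_none.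
rewrite (_ : map_poly _ _ = P) //; apply: eq_map_poly => q.
apply: meval_eq => i /=.
have -> : widen i = lift ord_max i by apply: val_inj => /=; rewrite /bump leqNgt ltn_ord.
by rewrite liftK.
Qed.


Definition van n (S : aset F n) (p : {mpoly F[n]}) := forall y, S y -> p.@[y] = 0.

Lemma zclosure_sub n (S : aset F n) : asubset S (zclosure S).
Proof. by move=> x Sx p Hp; apply: Hp. Qed.

Lemma zclosure_van n (S : aset F n) p : van S p -> van (zclosure S) p.
Proof. by move=> Hp y Hy; apply: Hy. Qed.

Lemma zclosure_mono n (S T : aset F n) : asubset S T -> asubset (zclosure S) (zclosure T).
Proof. by move=> ST x Hx p Hp; apply: Hx => y Sy; apply: Hp; apply: ST. Qed.

Lemma zclosed_zclosure n (S : aset F n) : zclosed (zclosure S).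
Proof. by exists (fun p => forall y, S y -> p.@[y] = 0). Qed.

Lemma zclosed_van n (A : aset F n) x : zclosed A -> ~ A x ->
  exists p, van A p /\ p.@[x] != 0.
Proof.
move=> [P HP] nAx.
have : ~ (forall p, P p -> p.@[x] = 0) by move=> H; apply: nAx; apply/HP.
move/not_all_ex_not => [p Hp]; exists p; split.
  move=> y /HP Ay; apply: Ay; apply: NNPP => nP; apply: Hp => Pp.
  by exfalso; apply: nP.
by apply/eqP => E; apply: Hp.
Qed.

Lemma zclosed_zero n (p : {mpoly F[n]}) : zclosed (fun y => p.@[y] = 0).
Proof.
exists (fun q => q = p) => x; split; first by move=> H q ->.
by move=> H; apply: H.
Qed.

Lemma van_closure_sub n (S A : aset F n) : zclosed A -> asubset S A ->
  asubset (zclosure S) A.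
Proof.
move=> cA SA x Hx; apply: NNPP => nAx.
have [p [vp px]] := zclosed_van cA nAx.
by move/eqP: px; apply; apply: Hx => y Sy; apply: vp; apply: SA.
Qed.

Lemma meval_comp_fun k n (P : 'I_n -> {mpoly F[k]}) (p : {mpoly F[n]}) t :
  p.@[fun c => (P c).@[t]] = (p \mPo [tuple P c | c < n]).@[t].
Proof. by rewrite comp_mpoly_meval; apply: meval_eq => i; rewrite tnth_mktuple. Qed.

Definition pimage k n (P : 'I_n -> {mpoly F[k]}) (u : {mpoly F[k]}) : aset F n :=
  fun y => exists t, u.@[t] != 0 /\ forall c, y c = (P c).@[t].

Lemma zirr_image k n (P : 'I_n -> {mpoly F[k]}) (u : {mpoly F[k]}) : u != 0 ->
  zirreducible (zclosure (pimage P u)).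
Proof.
move=> un0; split; [|exact: zclosed_zclosure|].
- have [t Ht] := mpoly_nonroot un0.
  by exists (fun c => (P c).@[t]); apply: zclosure_sub; exists t.
- move=> A B cA cB HZ; apply: NNPP => /not_or_and [nA nB].
  have ex : forall C : aset F n, ~ asubset (zclosure (pimage P u)) C ->
      exists x, zclosure (pimage P u) x /\ ~ C x.
    move=> C /not_all_ex_not [x Hx]; exists x; split.
      exact: (not_imply_elim _ _ Hx).
    exact: (not_imply_elim2 _ _ Hx).
  have [xA [ZA nAx]] := ex _ nA; have [xB [ZB nBx]] := ex _ nB.
  have [pA [vA pAx]] := zclosed_van cA nAx.
  have [pB [vB pBx]] := zclosed_van cB nBx.
  have Q0 : forall (q : {mpoly F[n]}) x, zclosure (pimage P u) x -> q.@[x] != 0 ->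
      q \mPo [tuple P c | c < n] != 0.
    move=> q x Zx qx; apply/eqP => E; move/eqP: qx; apply; apply: Zx.
    move=> y [t [_ Hy]]; rewrite (meval_eq _ Hy) meval_comp_fun E.
    exact: meval0.
  have := mulf_neq0 (mulf_neq0 (Q0 _ _ ZA pAx) (Q0 _ _ ZB pBx)) un0.
  move/mpoly_nonroot => [t]; rewrite !mevalM !mulf_eq0 !negb_or => /andP[/andP[tA tB] tu].
  have Zy : zclosure (pimage P u) (fun c => (P c).@[t]).
    by apply: zclosure_sub; exists t.
  case: (HZ _ Zy) => [/vA | /vB]; rewrite meval_comp_fun => E.
    by move: tA; rewrite E eqxx.
  by move: tB; rewrite E eqxx.
Qed.


Lemma poly_Xfactor (R : nzRingType) (P : {poly R}) : P != 0 ->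
  exists e (P' : {poly R}), P = 'X^e * P' /\ P'`_0 != 0.
Proof.
move: {2}(size P) (leqnn (size P)) => s; elim: s P => [|s IH] P.
  by rewrite size_poly_leq0 => /eqP -> /eqP.
move=> sP Pn0; have [P0|P0] := eqVneq (P`_0) 0; last by exists 0%N, P; rewrite expr0 mul1r.
have tk : take_poly 1 P = 0.
  by apply/polyP => i; rewrite coef_take_poly coef0; case: i => //.
have Pe : P = drop_poly 1 P * 'X by rewrite -{1}(poly_take_drop 1 P) tk add0r expr1.
have dn0 : drop_poly 1 P != 0 by apply: contra Pn0 => /eqP E; rewrite Pe E mul0r.
have [|e [P' [E1 E2]]] := IH _ _ dn0.
  rewrite size_drop_poly; case: (size P) sP => //= m; rewrite subn1 /=.
  by rewrite ltnS.
exists e.+1, P'; split=> //; rewrite Pe E1 -mulrA (commr_polyX P') mulrA -exprSr.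
by [].
Qed.

Definition indep n (Z : aset F n) k (q : 'I_k -> {mpoly F[n]}) :=
  forall R : {mpoly F[k]}, R != 0 -> exists y, Z y /\ R.@[fun i => (q i).@[y]] != 0.

Definition extq n k (q : 'I_k -> {mpoly F[n]}) (p : {mpoly F[n]}) : 'I_k.+1 -> {mpoly F[n]} :=
  fun j => if unlift ord_max j is Some j' then q j' else p.

Lemma unlift_widen k (i : 'I_k) : unlift ord_max (widen i) = Some i.
Proof.
have -> : widen i = lift ord_max i by apply: val_inj => /=; rewrite /bump leqNgt ltn_ord.
by rewrite liftK.
Qed.

Lemma indep_step n (Z1 Z2 : aset F n) k (q : 'I_k -> {mpoly F[n]}) p :
  indep Z1 q -> zirreducible Z2 -> asubset Z1 Z2 -> van Z1 p ->
  (exists y0, Z2 y0 /\ p.@[y0] != 0) -> indep Z2 (extq q p).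
Proof.
move=> iZ1 [_ _ irr] Z12 vp [y0 [Zy0 py0]] R Rn0.
apply: NNPP => /(not_ex_all_not _ _) H.
have HR : forall y, Z2 y -> R.@[fun i => (extq q p i).@[y]] = 0.
  move=> y Zy; apply: NNPP => nz; apply: (H y); split=> //; exact/eqP.
have mn0 : muni R != 0 by apply: contra Rn0 => /eqP /muni_eq0 ->.
have [e [P' [EP P'0]]] := poly_Xfactor mn0.
pose qt := [tuple q i | i < k].
pose Q := \sum_(j < size P') (P'`_j \mPo qt) * p ^+ j.
have QE : forall y, Q.@[y] = (map_poly (meval (fun i => (q i).@[y])) P').[p.@[y]].
  move=> y; rewrite (@horner_coef_wide _ (size P')); last exact: size_poly.
  rewrite raddf_sum /=; apply: eq_bigr => j _.
  rewrite mevalM rmorphXn coef_map comp_mpoly_meval; congr (_ * _).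
  by apply: meval_eq => i; rewrite tnth_mktuple.
have RE : forall y, R.@[fun i => (extq q p i).@[y]] = p.@[y] ^+ e * Q.@[y].
  move=> y; rewrite muni_eval EP rmorphM /= map_polyXn hornerM hornerXn QE.
  rewrite /extq unlift_none; congr (_ * _); congr horner; apply: eq_map_poly => r.
  by apply: meval_eq => i; rewrite unlift_widen.
have : asubset Z2 (fun y => p.@[y] = 0) \/ asubset Z2 (fun y => Q.@[y] = 0).
  apply: irr; try exact: zclosed_zero.
  move=> y Zy; have := HR y Zy; rewrite RE => /eqP; rewrite mulf_eq0 expf_eq0.
  by case/orP => [/andP [_ /eqP ->]|/eqP ->]; [left|right].
case=> [/(_ y0 Zy0) E|HQ]; first by move: py0; rewrite E eqxx.
have [y [Zy Hy]] := iZ1 _ P'0.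
move: Hy; rewrite -[X in X != 0]/((P'`_0%N).@[fun i => (q i).@[y]]).
have := HQ y (Z12 y Zy); rewrite QE (vp y Zy) horner_coef0 coef_map => -> .
by rewrite eqxx.
Qed.

Lemma chain_indep n (V : aset F n) k Z : zchain V k Z ->
  exists q : 'I_k -> {mpoly F[n]}, indep (Z k) q.
Proof.
move=> [HZ Hs].
suff : forall i, (i <= k)%N -> exists q : 'I_i -> {mpoly F[n]}, indep (Z i) q by apply.
elim=> [_|i IH ik].
  exists (fun _ => 0).
  move=> R Rn0; have [[y Zy] _ _] := (HZ 0%N isT).1.
  have [v Hv] := mpoly_nonroot Rn0; exists y; split=> //.
  by rewrite (@meval_eq _ _ _ v) // => -[].
have [q Hq] := IH (ltnW ik).
have [Z12 nZ21] := Hs i ik.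
have [y0 [Zy0 nZy0]] : exists y0, Z i.+1 y0 /\ ~ Z i y0.
  move/not_all_ex_not: nZ21 => [y Hy]; exists y; split.
    exact: (not_imply_elim _ _ Hy).
  exact: (not_imply_elim2 _ _ Hy).
have [_ cZi _] := (HZ i (ltnW ik)).1.
have [p [vp py]] := zclosed_van cZi nZy0.
exists (extq q p); apply: (indep_step Hq) => //; first exact: (HZ _ ik).1.
by exists y0.
Qed.

End Basic.


Section Dep.
Variable F : fieldType.

Lemma mx_ker_nz m n (A : 'M[F]_(m, n)) : (n < m)%N ->
  exists v : 'rV_m, v != 0 /\ v *m A = 0.
Proof.
move=> nm.
have kn0 : kermx A != 0.
  rewrite -mxrank_eq0 mxrank_ker subn_eq0 -ltnNge.
  exact: leq_ltn_trans (rank_leq_col A) nm.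
have [r Hr] : exists r, row r (kermx A) != 0.
  apply: NNPP => H; move/eqP: kn0; apply; apply/row_matrixP => r.
  rewrite row0; apply/eqP; apply: NNPP => Hr; apply: H; exists r; exact/negP.
exists (row r (kermx A)); split=> //.
by rewrite -row_mul mulmx_ker row0.
Qed.

Lemma msize_prod m (I : Type) (r : seq I) (f : I -> {mpoly F[m]}) :
  (msize (\prod_(i <- r) f i) <= (\sum_(i <- r) (msize (f i)).+1).+1)%N.
Proof.
elim: r => [|a r IH]; first by rewrite !big_nil msize1.
rewrite !big_cons; apply: leq_trans (msizeM_le _ _) _.
move: IH; lia.
Qed.

Lemma msize_exp m (p : {mpoly F[m]}) e :
  (msize (p ^+ e) <= e * (msize p).+1 + 1)%N.
Proof.
elim: e => [|e IH]; first by rewrite expr0 msize1.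
rewrite exprS; apply: leq_trans (msizeM_le _ _) _; move: IH; lia.
Qed.

Lemma mnm_le_mdeg m (mu : 'X_{1..m}) i : (mu i <= mdeg mu)%N.
Proof. by rewrite mdegE (bigD1 i) //= leq_addr. Qed.

Lemma leq_expl a b n : (a <= b)%N -> (a ^ n <= b ^ n)%N.
Proof. by move=> ab; elim: n => [|n IH] //; rewrite !expnS leq_mul. Qed.

Lemma alg_dep N k (s : 'I_k -> {mpoly F[N]}) : (N < k)%N ->
  exists R : {mpoly F[k]}, R != 0 /\ R \mPo [tuple s i | i < k] = 0.
Proof.
move=> Nk.
pose S := (\max_(i < k) msize (s i))%N.
pose D := ((k * (S + 2) + 1) ^ N + 1)%N.
pose B := (k * D * (S + 2) + 1)%N.
pose U := {ffun 'I_k -> 'I_D}.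
pose T := {ffun 'I_N -> 'I_B}.
pose mon (e : U) : 'X_{1..k} := [multinom (e i : nat) | i < k].
pose monT (t : T) : 'X_{1..N} := [multinom (t i : nat) | i < N].
pose sp (e : U) : {mpoly F[N]} := \prod_(i < k) (s i) ^+ (e i).
pose A : 'M[F]_(#|U|, #|T|) := \matrix_(r, c) (sp (enum_val r))@_(monT (enum_val c)).
have szsp : forall e, (msize (sp e) <= B)%N.
  move=> e; apply: leq_trans (msize_prod _ _) _.
  have H1 : forall i, ((msize (s i ^+ e i)).+1 <= D * (S + 2))%N.
    move=> i; apply: leq_trans (_ : ((e i) * (msize (s i)).+1 + 2 <= _)%N).
      have := msize_exp (s i) (e i); lia.
    have h1 : (msize (s i) <= S)%N by apply: (leq_bigmax_cond (F := fun i => msize (s i))).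
    have h2 : (e i < D)%N := ltn_ord (e i).
    nia.
  rewrite /B addn1 ltnS -mulnA.
  have := @leq_sum _ (index_enum 'I_k) xpredT (fun i => (msize (s i ^+ e i)).+1)
    (fun _ => (D * (S + 2))%N) (fun i _ => H1 i).
  by rewrite sum_nat_const card_ord.
have card : (#|T| < #|U|)%N.
  rewrite !card_ffun !card_ord.
  pose X := (k * (S + 2) + 1)%N.
  have hB : (B <= D * X)%N by rewrite /B /X /D; nia.
  apply: leq_ltn_trans (leq_expl N hB) _.
  rewrite expnMn.
  have hX : (X ^ N < D)%N by rewrite /D addn1.
  have hD : (0 < D)%N by rewrite /D addn1.
  apply: (@leq_trans (D ^ N * D)).
    by rewrite ltn_mul2l expn_gt0 hD.
  by rewrite -expnSr leq_pexp2l.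
have [v [vn0 vA]] := mx_ker_nz A card.
pose vv (e : U) := v 0 (enum_rank e).
pose R := \sum_(e : U) vv e *: 'X_[mon e].
have mon_inj : injective mon.
  move=> e1 e2 /mnmP E; apply/ffunP => i; apply: val_inj.
  by have := E i; rewrite !mnmE.
exists R; split.
  have [r vr] : exists r, v 0 r != 0.
    apply: NNPP => H; move/eqP: vn0; apply; apply/rowP => r.
    rewrite mxE; apply/eqP; apply: NNPP => Hr; apply: H; exists r; exact/negP.
  apply/eqP => /(congr1 (mcoeff (mon (enum_val r)))).
  rewrite mcoeff0 raddf_sum /= (bigD1 (enum_val r)) //= big1.
    by rewrite mcoeffZ mcoeffX eqxx mulr1 addr0 /vv enum_valK => E; move: vr; rewrite E eqxx.
  move=> e ne; rewrite mcoeffZ mcoeffX; case: eqP => [/mon_inj E|]; last by rewrite mulr0.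
  by move: ne; rewrite E eqxx.
have RE : R \mPo [tuple s i | i < k] = \sum_(e : U) vv e *: sp e.
  rewrite raddf_sum /=; apply: eq_bigr => e _.
  rewrite comp_mpolyZ comp_mpolyX; congr (_ *: _); apply: eq_bigr => i _.
  by rewrite tnth_mktuple mnmE.
rewrite RE; apply/mpolyP => mu; rewrite mcoeff0 raddf_sum /=.
have [mulB|muB] := ltnP (mdeg mu) B.
  have hmu : forall i, (mu i < B)%N.
    move=> i; exact: leq_ltn_trans (mnm_le_mdeg mu i) mulB.
  pose t : T := [ffun i => Ordinal (hmu i)].
  have mt : monT t = mu.
    by apply/mnmP => i; rewrite mnmE ffunE.
  have := congr1 (fun M : 'rV_#|T| => M 0 (enum_rank t)) vA.
  rewrite !mxE /= => E; apply: (eq_trans _ E).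
  rewrite (reindex (@enum_rank U)) /=; last exact: onW_bij (@enum_rank_bij U).
  apply: eq_bigr => e _; rewrite mcoeffZ mxE !enum_rankK mt.
  by [].
rewrite big1 // => e _; rewrite mcoeffZ.
have : mu \notin msupp (sp e) by apply: msize_mdeg_ge; apply: leq_trans (szsp e) muB.
by rewrite mcoeff_msupp negbK => /eqP ->; rewrite mulr0.
Qed.

End Dep.


Section Family.
Variable F : closedFieldType.
Variables a b : nat.
Local Notation M := (a + b).-1.

Definition gidx (j : nat) : 'I_M.+1 := inord (if (j < a)%N then j else M).
Definition hidx (j : nat) : 'I_M.+1 := inord (M - j).

Definition Gp : {poly {mpoly F[M.+1]}} := \poly_(j < a.+1) 'X_(gidx j).
Definition Hp : {poly {mpoly F[M.+1]}} :=
  'X^b + \poly_(j < b) (if j == 0%N then 0 else 'X_(hidx j)).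

Definition gev (s : 'I_M.+1 -> F) : {poly F} := \poly_(j < a.+1) s (gidx j).
Definition hev (s : 'I_M.+1 -> F) : {poly F} :=
  'X^b + \poly_(j < b) (if j == 0%N then 0 else s (hidx j)).

Definition fcoef (i : nat) : {mpoly F[M.+1]} := (Gp \Po Hp)`_i.

Lemma fcoef_eval i s : (fcoef i).@[s] = (gev s \Po hev s)`_i.
Proof.
have EG : map_poly (meval s) Gp = gev s.
  apply/polyP => j; rewrite coef_map /Gp /gev !coef_poly; case: ifP => _; last exact: meval0.
  exact: mevalXU.
have EH : map_poly (meval s) Hp = hev s.
  rewrite /Hp /hev rmorphD /= map_polyXn; congr (_ + _).
  apply/polyP => j; rewrite coef_map !coef_poly; case: ifP => _; last exact: meval0.
  case: ifP => _; [exact: meval0 | exact: mevalXU].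
by rewrite /fcoef -coef_map map_comp_poly EG EH.
Qed.

Hypothesis a1 : (1 <= a)%N.
Hypothesis b1 : (1 <= b)%N.

Lemma coef_gev s j : (gev s)`_j =
  if (j < a)%N then s (inord j) else if j == a then s (inord M) else 0.
Proof.
rewrite coef_poly /gidx ltnS leq_eqVlt.
case: (ltngtP j a) => ja; by rewrite /=.
Qed.

Lemma coef_hev s j : (hev s)`_j =
  if j == b then 1 else if (0 < j < b)%N then s (inord (M - j)) else 0.
Proof.
rewrite coefD coefXn coef_poly /hidx.
case: (ltngtP j b) => jb; rewrite /=.
- rewrite add0r andbT; by case: j jb.
- by rewrite addr0 andbF.
- by rewrite addr0.
Qed.


Lemma gidx_a : gidx a = inord M.
Proof. by rewrite /gidx ltnn. Qed.

Lemma size_gev s : s (inord M) != 0 -> size (gev s) = a.+1.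
Proof. by move=> H; rewrite size_poly_eq //= gidx_a. Qed.

Lemma lead_gev s : s (inord M) != 0 -> lead_coef (gev s) = s (inord M).
Proof. by move=> H; rewrite lead_coefE size_gev // coef_gev ltnn eqxx. Qed.

Lemma size_hev_aux s : (size (\poly_(j < b) (if j == 0%N then 0 else s (hidx j))) < size ('X^b : {poly F}))%N.
Proof. by rewrite size_polyXn ltnS; apply: size_poly. Qed.

Lemma size_hev s : size (hev s) = b.+1.
Proof. rewrite /hev size_polyDl; [exact: size_polyXn | by rewrite size_polyXn ltnS; apply: size_poly]. Qed.

Lemma lead_hev s : lead_coef (hev s) = 1.
Proof. rewrite /hev lead_coefDl; [exact: lead_coefXn | by rewrite size_polyXn ltnS; apply: size_poly]. Qed.

Lemma size_fam s : s (inord M) != 0 -> size (gev s \Po hev s) = (a * b).+1.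
Proof.
move=> H; have := size_comp_poly (gev s) (hev s).
rewrite size_gev // size_hev /= => E.
have : size (gev s \Po hev s) != 0%N.
  rewrite size_poly_eq0 comp_poly_eq0 ?size_hev // -size_poly_eq0 size_gev //.
by case: (size _) E => //= n ->.
Qed.

Lemma top_fam s : s (inord M) != 0 -> (gev s \Po hev s)`_(a * b) = s (inord M).
Proof.
move=> H; have hs : (1 < size (hev s))%N by rewrite size_hev ltnS.
have := lead_coef_comp (gev s) hs.
by rewrite lead_coefE size_fam // lead_hev expr1n mulr1 lead_gev.
Qed.

Lemma fam_Dset d s : (2 <= a)%N -> (2 <= b)%N -> d = (a * b)%N -> s (inord M) != 0 ->
  Dset (fun c : 'I_d.+1 => (gev s \Po hev s)`_c).
Proof.
move=> a2 b2 -> H; rewrite /Dset.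
have -> : \poly_(i < (a * b).+1) (gev s \Po hev s)`_(@inord (a * b) i) = gev s \Po hev s.
  apply/polyP => i; rewrite coef_poly; case: ifP => hi; first by rewrite inordK.
  by rewrite nth_default // size_fam // leqNgt hi.
split; first exact: size_fam.
by exists (gev s), (hev s); rewrite size_gev // size_hev !ltnS.
Qed.

End Family.

Lemma Dset_cover (F : closedFieldType) d (c : 'I_d.+1 -> F) : Dset c ->
  exists a b, [/\ (2 <= a)%N, (2 <= b)%N, d = (a * b)%N &
    exists s : 'I_((a + b).-1).+1 -> F, forall i : 'I_d.+1, c i = (@gev _ a b s \Po @hev _ a b s)`_i].
Proof.
move=> [sz [g [h [sg [sh fE]]]]].
set f := \poly_(i < d.+1) c (inord i) in sz fE.
have hn0 : lead_coef h != 0.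
  by rewrite lead_coef_eq0 -size_poly_eq0; case: (size h) sh.
set lam := lead_coef h in hn0; set mu := h`_0.
pose h' := lam^-1 *: (h - mu%:P).
pose l := lam *: 'X + mu%:P.
have hl : l \Po h' = h.
  rewrite /l comp_polyD comp_polyZ comp_polyX comp_polyC /h' scalerA mulfV //.
  by rewrite scale1r subrK.
have fg : f = (g \Po l) \Po h' by rewrite -comp_polyA hl.
have szl : size l = 2%N.
  rewrite /l size_polyDl size_scale // size_polyX //.
  by apply: leq_ltn_trans (size_polyC_leq1 _) _.
have szg' : size (g \Po l) = size g by rewrite size_comp_poly2.
have szhm : size (h - mu%:P) = size h.
  rewrite size_polyDl // size_polyN; apply: leq_ltn_trans (size_polyC_leq1 _) _.
  by apply: leq_trans sh.
have szh' : size h' = size h by rewrite size_scale ?invr_eq0 //.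
have lh' : lead_coef h' = 1.
  rewrite lead_coefZ /lead_coef szhm coefB coefC.
  have -> : ((size h).-1 == 0%N) = false by case: (size h) sh => // -[].
  by rewrite subr0 -/(lead_coef h) -/lam mulVf.
have h'0 : h'`_0 = 0 by rewrite coefZ coefB coefC /= subrr mulr0.
pose a := (size g).-1; pose b := (size h).-1.
have a2 : (2 <= a)%N by rewrite /a; case: (size g) sg.
have b2 : (2 <= b)%N by rewrite /b; case: (size h) sh.
have dab : d = (a * b)%N.
  have := size_comp_poly g h; rewrite -fE sz /=.
  done.
exists a, b; split => //.
set M := (a + b).-1.
pose s (i : 'I_M.+1) := if (i < a)%N then (g \Po l)`_i
  else if (i == M :> nat) then (g \Po l)`_a else h'`_(M - i).
have a1 : (1 <= a)%N by apply: leq_trans a2.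
have b1 : (1 <= b)%N by apply: leq_trans b2.
have Eg : @gev _ a b s = g \Po l.
  apply/polyP => j; rewrite coef_gev //.
  have hM : (M < M.+1)%N by [].
  case: ltnP => ja.
    by rewrite /s inordK ?ja //; apply: leq_trans ja _; rewrite /M; lia.
  case: eqP => [->|jna].
    rewrite /s inordK //; have -> : (M < a)%N = false by rewrite /M; lia.
    by rewrite eqxx.
  rewrite nth_default // szg'; rewrite /a in ja jna; case: (size g) sg ja jna => // n _ /=.
  lia.
have Eh : @hev _ a b s = h'.
  apply/polyP => j; rewrite coef_hev //.
  case: eqP => [->|jb].
    by rewrite -lh' /lead_coef szh'.
  case: ifP => /andP hj.
    case: hj => j0 jb'; rewrite /s inordK; last by rewrite /M; lia.
    have -> : (M - j < a)%N = false by rewrite /M; lia.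
    have -> : ((M - j)%N == M) = false by rewrite /M; lia.
    by congr (h'`_ _); rewrite /M; lia.
  case: j jb hj => [|j] jb hj; first by rewrite h'0.
  rewrite nth_default // szh'; rewrite /b in jb hj; case: (size h) sh jb hj => // n _ /= jb hj.
  lia.
exists s => i; rewrite Eg Eh -fg /f coef_poly ltn_ord.
by rewrite inord_val.
Qed.


Lemma ab_bound d a b : (2 <= a)%N -> (2 <= b)%N -> d = (a * b)%N ->
  (a + b <= pdiv d + d %/ pdiv d)%N.
Proof.
move=> a2 b2 dE.
have la : (pdiv d <= a)%N by apply: pdiv_min_dvd => //; rewrite dE dvdn_mulr.
have lb : (pdiv d <= b)%N by apply: pdiv_min_dvd => //; rewrite dE dvdn_mull.
have lq : (pdiv d * (d %/ pdiv d) = d)%N by rewrite mulnC divnK // pdiv_dvd.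
have l0 := pdiv_gt0 d.
move: la lb lq l0; set l := pdiv d; set q := (d %/ l)%N; rewrite dE => la lb lq l0.
nia.
Qed.

Section Upper.
Variable F : closedFieldType.
Variable d : nat.

Lemma dep_list k (q : 'I_k -> {mpoly F[d.+1]}) (r : seq nat) :
  (forall a, a \in r -> ((a + d %/ a).-1.+1 < k)%N) ->
  exists R : {mpoly F[k]}, R != 0 /\ forall a, a \in r ->
    forall s : 'I_((a + d %/ a).-1).+1 -> F,
      R.@[fun i => (q i).@[fun c : 'I_d.+1 => (@gev F a (d %/ a) s \Po @hev F a (d %/ a) s)`_c]] = 0.
Proof.
elim: r => [|a r IH] Hr.
  by exists 1; split; [exact: oner_neq0 | move=> a].
have [R [Rn0 HR]] : exists R : {mpoly F[k]}, _ := IH (fun a0 ar => Hr a0 (mem_behead (s := a :: r) ar)).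
pose sq (i : 'I_k) := q i \mPo [tuple @fcoef F a (d %/ a) c | c < d.+1].
have [Ra [Ran0 HRa]] := alg_dep sq (Hr a (mem_head _ _)).
exists (Ra * R); split; first by rewrite mulf_neq0.
move=> a' /predU1P [->|a'r] s; rewrite mevalM; last by rewrite HR // mulr0.
rewrite -[X in X * _](_ : (Ra \mPo [tuple sq i | i < k]).@[s] = _); last first.
  rewrite comp_mpoly_meval; apply: meval_eq => i; rewrite tnth_mktuple /sq.
  rewrite comp_mpoly_meval; apply: meval_eq => c; rewrite tnth_mktuple.
  by rewrite fcoef_eval.
by rewrite HRa meval0 mul0r.
Qed.


Lemma upper_bound k Z : zchain (zclosure (@Dset F d)) k Z ->
  (k <= pdiv d + d %/ pdiv d)%N.
Proof.
move=> ch; have [q iq] := chain_indep ch.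
rewrite leqNgt; apply/negP => km.
pose r := [seq a <- iota 0 d.+1 | (2 <= a)%N && (a %| d)%N && (2 <= d %/ a)%N].
have Hr : forall a, a \in r -> ((a + d %/ a).-1.+1 < k)%N.
  move=> a; rewrite mem_filter => /andP [/andP [/andP [a2 ad] b2] _].
  have := ab_bound a2 b2 (esym (etrans (mulnC _ _) (divnK ad))).
  move: km; lia.
have [R [Rn0 HR]] := dep_list q Hr.
have van : forall y, Dset y -> (R \mPo [tuple q i | i < k]).@[y] = 0.
  move=> y /Dset_cover [a [b [a2 b2 dE [s Hs]]]].
  have bE : (d %/ a)%N = b by rewrite dE mulKn //; apply: leq_trans a2.
  have ar : a \in r.
    rewrite mem_filter mem_iota /= bE a2 b2 dE dvdn_mulr //= ltnS.
    by rewrite -{1}(muln1 a) leq_mul2l (leq_trans _ b2) ?orbT.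
  subst b.
  rewrite comp_mpoly_meval -(HR a ar s); apply: meval_eq => i; rewrite tnth_mktuple.
  by apply: meval_eq => c; exact: Hs c.
have [y [Zy Hy]] := iq R Rn0.
have Vy : zclosure (@Dset F d) y := ((ch.1 k (leqnn k)).2 y Zy).
move: Hy; rewrite (_ : R.@[_] = (R \mPo [tuple q i | i < k]).@[y]).
  by rewrite (zclosure_van van Vy) eqxx.
by rewrite comp_mpoly_meval; apply: meval_eq => i; rewrite tnth_mktuple.
Qed.

End Upper.


Section PolyLow.
Variable F : fieldType.

Lemma pow_low (h : {poly F}) k n i : (forall j, (j < k)%N -> h`_j = 0) ->
  (i < n * k)%N -> (h ^+ n)`_i = 0.
Proof.
move=> hk; elim: n i => [|n IH] i //.
move=> ik; rewrite exprS coefM big1 // => j _.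
have [jk|jk] := ltnP j k; first by rewrite hk ?mul0r.
rewrite IH ?mulr0 //; move: ik jk; case: j => j /=; lia.
Qed.

Lemma sum_ind1 n (x : F) : \sum_(j < n) (if (j == 1%N :> nat) then x else 0) =
  if (1 < n)%N then x else 0.
Proof.
elim: n => [|n IH]; first by rewrite big_ord0.
rewrite big_ord_recr /= IH; case: n IH => [|[|n]] _ //=; rewrite ?addr0 ?add0r //.
Qed.

Lemma comp_low (g h : {poly F}) k : (0 < k)%N -> (forall j, (j < k)%N -> h`_j = 0) ->
  (g \Po h)`_k = g`_1 * h`_k.
Proof.
move=> k0 hk; rewrite comp_polyE coef_sum.
rewrite (eq_bigr (fun j : 'I_(size g) => if (j == 1%N :> nat) then g`_1 * h`_k else 0)).
  rewrite sum_ind1; case: ltnP => // sg.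
  by rewrite nth_default ?mul0r.
move=> [j hj] _ /=; rewrite coefZ; case: eqP => [->|j1]; first by rewrite expr1.
case: j j1 hj => [|[|j]] // _ _.
  by rewrite expr0 coef1; case: k k0 hk => // ? _ _; rewrite mulr0.
by rewrite (@pow_low h k) ?mulr0 //; rewrite mulSn; move: k0; lia.
Qed.

End PolyLow.

Section Lower.
Variable F : closedFieldType.
Variables d a b : nat.
Hypothesis a2 : (2 <= a)%N.
Hypothesis b2 : (2 <= b)%N.
Hypothesis dab : d = (a * b)%N.
Local Notation M := (a + b).-1.

Let a1 : (1 <= a)%N. Proof. exact: leq_trans a2. Qed.
Let b1 : (1 <= b)%N. Proof. exact: leq_trans b2. Qed.

Definition ms (i : nat) (t : 'I_M.+1 -> F) : 'I_M.+1 -> F :=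
  fun j => if (j < i)%N then t j else ((j : nat) == M)%:R.

Definition maskp (i : nat) (j : 'I_M.+1) : {mpoly F[M.+1]} :=
  if (j < i)%N then 'X_j else (((j : nat) == M)%:R)%:MP.

Definition Pc i (c : 'I_d.+1) := @fcoef F a b c \mPo [tuple maskp i j | j < M.+1].

Definition Sst i : aset F d.+1 := pimage (Pc i) (maskp i (inord M)).

Lemma maskp_eval i t j : (maskp i j).@[t] = ms i t j.
Proof. by rewrite /maskp /ms; case: ifP => _; [exact: mevalXU | exact: mevalC]. Qed.

Lemma gev_ext (s1 s2 : 'I_M.+1 -> F) : s1 =1 s2 -> @gev F a b s1 = @gev F a b s2.
Proof. by move=> E; apply/polyP => j; rewrite !coef_gev // !E. Qed.

Lemma hev_ext (s1 s2 : 'I_M.+1 -> F) : s1 =1 s2 -> @hev F a b s1 = @hev F a b s2.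
Proof. by move=> E; apply/polyP => j; rewrite !coef_hev // !E. Qed.

Lemma Sst_iff i y : Sst i y <-> exists t, ms i t (inord M) != 0 /\
  forall c : 'I_d.+1, y c = (@gev F a b (ms i t) \Po @hev F a b (ms i t))`_c.
Proof.
split=> [[t [Ht Hy]]|[t [Ht Hy]]]; exists t; split.
- by rewrite -maskp_eval.
- move=> c; rewrite Hy /Pc comp_mpoly_meval -fcoef_eval; apply: meval_eq => j.
  by rewrite tnth_mktuple maskp_eval.
- by rewrite maskp_eval.
- move=> c; rewrite Hy /Pc comp_mpoly_meval -fcoef_eval; apply: meval_eq => j.
  by rewrite tnth_mktuple maskp_eval.
Qed.

Lemma mpolyX_neq0 n (j : 'I_n) : ('X_j : {mpoly F[n]}) != 0.
Proof.
apply/eqP => /(congr1 (mcoeff U_(j)%MM)); rewrite mcoeffX eqxx mcoeff0.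
by move/eqP; rewrite oner_eq0.
Qed.

Lemma maskp_nz i : maskp i (inord M) != 0.
Proof.
rewrite /maskp inordK //; case: ifP => _; first exact: mpolyX_neq0.
by rewrite eqxx mpolyC_eq0 oner_eq0.
Qed.

Lemma Dset_ext (y y' : 'I_d.+1 -> F) : (forall c, y c = y' c) -> Dset y' -> Dset y.
Proof.
move=> E; rewrite /Dset.
by rewrite (@eq_poly _ _ (fun i => y (inord i)) (fun i => y' (inord i))) // => i _; rewrite E.
Qed.

Lemma Sst_Dset i : asubset (Sst i) (@Dset F d).
Proof.
move=> y /Sst_iff [t [Ht Hy]]; apply: (Dset_ext Hy).
exact: fam_Dset.
Qed.

Lemma Sst_mono i : asubset (Sst i) (Sst i.+1).
Proof.
move=> y /Sst_iff [t [Ht Hy]]; apply/Sst_iff; exists (ms i t).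
have E : ms i.+1 (ms i t) =1 ms i t.
  move=> j; rewrite /ms; case: ltnP => ji; case: ltnP => ji' //.
  by move: ji ji'; lia.
split; first by rewrite E.
by move=> c; rewrite Hy (gev_ext E) (hev_ext E).
Qed.


Lemma evalP (c0 : 'I_d.+1) (x : F) y :
  ('X_c0 - x%:MP : {mpoly F[d.+1]}).@[y] = y c0 - x.
Proof. by rewrite mevalB mevalXU mevalC. Qed.

Lemma exists_lam : exists x : F, x != 0 /\ x != 1.
Proof.
have : ('X * ('X - 1) : {poly F}) != 0.
  by rewrite mulf_neq0 ?polyX_eq0 // -size_poly_eq0 size_XsubC.
move/closed_nonrootP => [x]; rewrite /root hornerM hornerXsubC hornerX mulf_eq0 negb_or.
by rewrite subr_eq0 => /andP [? ?]; exists x.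
Qed.

Lemma natb0 (c : bool) : c = false -> (c%:R : F) = 0.
Proof. by move->. Qed.

Lemma strict_step i : (i < M.+1)%N ->
  exists P : {mpoly F[d.+1]}, van (Sst i) P /\ exists y, Sst i.+1 y /\ P.@[y] != 0.
Proof.
move=> iM.
have Mab : M = (a + b - 1)%N by lia.
have [ia|ai] := ltnP i a.
  have bid : (b * i < d.+1)%N by rewrite dab ltnS mulnC leq_mul2r ltnW ?orbT.
  pose c0 : 'I_d.+1 := Ordinal bid.
  have hX : forall s : 'I_M.+1 -> F, (forall j, (a <= j < M)%N -> s (inord j) = 0) ->
      @hev F a b s = 'X^b.
    move=> s Hs; apply/polyP => j; rewrite coef_hev // coefXn.
    case: eqP => // _; case: ifP => // /andP [j0 jb]; apply: Hs; lia.
  have key : forall s, (forall j, (a <= j < M)%N -> s (inord j) = 0) ->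
      (@gev F a b s \Po @hev F a b s)`_(b * i) = s (inord i).
    move=> t Ht; rewrite hX // coef_comp_poly_Xn; last by apply: leq_trans b2.
    by rewrite dvdn_mulr // mulKn ?coef_gev ?ia //; apply: leq_trans b2.
  exists ('X_c0 - 0%:MP); split.
    move=> y /Sst_iff [t [_ Hy]]; rewrite evalP Hy subr0 /= key.
      by rewrite /ms inordK ?ltnn; [apply: natb0; lia | lia].
    by move=> j hj; rewrite /ms inordK; [rewrite ifF; [apply: natb0; lia|lia]|lia].
  pose ts := fun j : 'I_M.+1 => ((j : nat) == i)%:R : F.
  exists (fun c => (@gev F a b (ms i.+1 ts) \Po @hev F a b (ms i.+1 ts))`_c); split.
    apply/Sst_iff; exists ts; split=> //.
    by rewrite /ms inordK // ifF ?eqxx ?oner_eq0 //; lia.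
  rewrite evalP subr0 /= key.
    by rewrite /ms inordK ?ltnSn /ts ?inordK ?eqxx ?oner_eq0 //; lia.
  move=> j hj; rewrite /ms inordK; last lia.
  case: ifP => hji; rewrite /ts.
    by apply: natb0; lia.
  by apply: natb0; lia.
have [iM'|iMe] := ltnP i M.
  pose k := (M - i)%N.
  have kd : (k < d.+1)%N.
    have : (b <= a * b)%N by rewrite leq_pmull.
    by rewrite dab /k; lia.
  pose c0 : 'I_d.+1 := Ordinal kd.
  have low : forall s : 'I_M.+1 -> F, (forall j, (i < j < M)%N -> s (inord j) = 0) ->
      forall j, (j < k)%N -> (@hev F a b s)`_j = 0.
    move=> s Hs j jk; rewrite coef_hev //; case: eqP => [jb|_]; first by rewrite /k in jk; lia.
    case: ifP => // /andP [j0 jb]; apply: Hs; rewrite /k in jk; lia.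
  exists ('X_c0 - 0%:MP); split.
    move=> y /Sst_iff [t [_ Hy]]; rewrite evalP Hy subr0 /=.
    rewrite (@comp_low _ _ _ k); first last.
    - apply: low => j hj; rewrite /ms inordK; last lia.
      by rewrite ifF; [apply: natb0; lia | lia].
    - by rewrite /k; lia.
    rewrite coef_hev // ifF; last by rewrite /k; lia.
    rewrite ifT; last by rewrite /k; lia.
    rewrite /ms inordK; last by rewrite /k; lia.
    by rewrite ifF; [rewrite natb0 ?mulr0 // /k; lia | rewrite /k; lia].
  pose ts := fun j : 'I_M.+1 => (((j : nat) == 1%N) || ((j : nat) == i))%:R : F.
  exists (fun c => (@gev F a b (ms i.+1 ts) \Po @hev F a b (ms i.+1 ts))`_c); split.
    apply/Sst_iff; exists ts; split=> //.
    by rewrite /ms inordK // ifF ?eqxx ?oner_eq0 //; lia.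
  rewrite evalP subr0 /=.
  rewrite (@comp_low _ _ _ k); first last.
  - apply: low => j hj; rewrite /ms inordK; last lia.
    by rewrite ifF; [apply: natb0; lia | lia].
  - by rewrite /k; lia.
  rewrite coef_gev // ifT; last lia.
  rewrite coef_hev // ifF; last by rewrite /k; lia.
  rewrite ifT; last by rewrite /k; lia.
  rewrite /ms !inordK; try (rewrite /k; lia).
  rewrite ifT; last lia.
  rewrite ifT; last by rewrite /k; lia.
  rewrite /ts !inordK; try (rewrite /k; lia).
  have -> : (M - k)%N = i by rewrite /k; lia.
  by rewrite !eqxx orbT /= mulr1 oner_eq0.
have iE : i = M by lia.
have dd : (d < d.+1)%N by [].
pose c0 : 'I_d.+1 := Ordinal dd.
have e : (nat_of_ord c0) = (a * b)%N by rewrite /= dab.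
exists ('X_c0 - 1%:MP); split.
  move=> y /Sst_iff [t [Ht Hy]]; rewrite evalP Hy e top_fam //.
  by rewrite /ms inordK // iE ltnn eqxx subrr.
have [x [x0 x1]] := exists_lam.
pose ts := fun j : 'I_M.+1 => x.
have E : forall j, ms i.+1 ts j = x by move=> j; rewrite /ms iE ltn_ord.
exists (fun c => (@gev F a b (ms i.+1 ts) \Po @hev F a b (ms i.+1 ts))`_c); split.
  by apply/Sst_iff; exists ts; split=> //; rewrite E.
by rewrite evalP e top_fam // ?E ?subr_eq0.
Qed.

Lemma lower_chain : exists Z, zchain (zclosure (@Dset F d)) (a + b) Z.
Proof.
exists (fun i => zclosure (Sst i)); split.
  move=> i _; split; first exact: zirr_image (maskp_nz i).
  exact: zclosure_mono (@Sst_Dset i).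
move=> i ilt; split; first exact: zclosure_mono (@Sst_mono i).
have iM : (i < M.+1)%N by lia.
have [P [vP [y [Sy Py]]]] := strict_step iM.
move=> H; move: Py; rewrite (zclosure_van vP (H y (zclosure_sub Sy))) eqxx.
by [].
Qed.

End Lower.

Local Close Scope ring_scope.

Theorem theorem5p1 (F : closedFieldType) (d : nat) (hd : (2 <= d)%N) :
  (prime d -> forall c, ~ @Dset F d c) /\
  (~ prime d -> dim_eq (@Dset F d) (pdiv d + d %/ pdiv d)).
Proof.
split.
  move=> pd c /Dset_cover [a [b [a2 b2 dE _]]].
  have ad : (a %| d)%N by rewrite dE dvdn_mulr.
  have a1 : a != 1%N by case: a a2 {dE ad} => [|[|]].
  have := (prime_nt_dvdP pd a1); move/(_ ad) => aE.
  move: dE; rewrite -aE; nia.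
move=> npd.
have l2 : (2 <= pdiv d)%N by apply: prime_gt1; apply: pdiv_prime.
have dab : d = (pdiv d * (d %/ pdiv d))%N by rewrite mulnC divnK // pdiv_dvd.
have b2 : (2 <= d %/ pdiv d)%N.
  case E: (d %/ pdiv d) => [|[|n]] //; move: dab; rewrite E.
    by rewrite muln0 => d0; move: hd; rewrite d0.
  by rewrite muln1 => dE; exfalso; apply: npd; rewrite {1}dE pdiv_prime.
split.
  exact: lower_chain l2 b2 dab.
move=> k Z; exact: upper_bound.
Qed.
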